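(* Let $(S,\to)$ be a labelled transition system with a merge $\|$. If $s\leftrightarrow_b^{\Delta}t$ and $u\leftrightarrow_b^{\Delta}v$, then $s\|u\leftrightarrow_b^{\Delta}t\|v$.
   Context: Fix a set $\mathrm{Act}$ of actions containing a special action $\tau$. A labelled transition system (LTS) is a pair $(S,\to)$ with $S$ a set of states and $\to\subseteq S\times\mathrm{Act}\times S$; write $s\xrightarrow{a}s'$ for $(s,a,s')\in\to$. A path from $s$ is an alternating sequence $s_0,a_1,s_1,a_2,\dots$ of states and actions, ending with a state if finite, with $s_0=s$ and $s_{k-1}\xrightarrow{a_k}s_k$ for all relevant $k$. A colouring is a function $\mathcal{C}$ from $S$ to an arbitrary set of colours. For a path $\pi=s_0,a_1,s_1,\dots$, $\mathcal{C}(\pi)$ is the alternating sequence obtained from $\mathcal{C}(s_0),a_1,\mathcal{C}(s_1),a_2,\dots$ by contracting every finite maximal consecutive subsequence of the form $C,\tau,C,\tau,\dots,\tau,C$ and every infinite maximal consecutive subsequence $C,\tau,C,\tau,\dots$ to $C$. The sequences $\mathcal{C}(\pi)$ with $\pi$ a path from $s$ are the $\mathcal{C}$-coloured traces of $s$; $\mathcal{C}(\pi)$ is a divergent $\mathcal{C}$-coloured trace of $s$ if $\pi$ is an infinite path from $s$ and $\mathcal{C}(\pi)$ is finite. A colouring is consistent if any two states of the same colour have the same $\mathcal{C}$-coloured traces, and a consistent colouring preserves divergence if any two states of the same colour have the same divergent $\mathcal{C}$-coloured traces. $s\leftrightarrow_b^{\Delta}t$ (branching bisimulation equivalence with explicit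 divergence) iff there is a consistent, divergence preserving colouring $\mathcal{C}$ with $\mathcal{C}(s)=\mathcal{C}(t)$. A binary operation $\|$ on $S$ is a merge if for all $s,t,u\in S$ and $a\in\mathrm{Act}$: $s\|t\xrightarrow{a}u$ iff either there is $s'$ with $s\xrightarrow{a}s'$ and $u=s'\|t$, or there is $t'$ with $t\xrightarrow{a}t'$ and $u=s\|t'$. *)

(* Defs.v *)
(* Branching bisimulation with explicit divergence via
   consistent, divergence-preserving colourings (van Glabbeek et al.). *)
Set Implicit Arguments.

Section LTS.
Variables (Act : Type) (tau : Act) (St : Type) (step : St -> Act -> St -> Prop).

(* A (finite or infinite) path from s: p n = Some (a_{n+1}, s_{n+1}) is the
   (n+1)-th transition; p n = None means the path has ended (length <= n).
   Definedness is downward closed. *)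
Definition pre (s : St) (p : nat -> option (Act * St)) (n : nat) : St :=
  match n with
  | O => s
  | Datatypes.S n' => match p n' with Some (_, x) => x | None => s end
  end.

Definition is_path (s : St) (p : nat -> option (Act * St)) : Prop :=
  (forall n, p n = None -> p (Datatypes.S n) = None) /\
  (forall n a x, p n = Some (a, x) -> step (pre s p n) a x).

Definition infinite_path (p : nat -> option (Act * St)) : Prop :=
  forall n, p n <> None.

Section Colour.
Variables (K : Type) (C : St -> K).

Definition observable (s : St) (p : nat -> option (Act * St)) (n : nat) : Prop :=
  exists a x, p n = Some (a, x) /\ ~ (a = tau /\ C x = C (pre s p n)).

(* C(p) is the coloured trace (c0, f): initial colour c0 followed by the
   (finite or infinite, downward closed) sequence f of (action, colour) pairs.
   It is obtained by contracting all maximal subsequences C,tau,C,tau,...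
   i.e. by deleting exactly the non-observable steps; g enumerates the
   positions of the observable steps in increasing order. *)
Definition ctrace (s : St) (p : nat -> option (Act * St))
    (c0 : K) (f : nat -> option (Act * K)) : Prop :=
  c0 = C s /\
  (forall k, f k = None -> f (Datatypes.S k) = None) /\
  exists g : nat -> nat,
    (forall k, g k < g (Datatypes.S k)) /\
    (forall k ac, f k = Some ac ->
        observable s p (g k) /\
        exists x, p (g k) = Some (fst ac, x) /\ snd ac = C x) /\
    (forall n, observable s p n -> exists k, g k = n /\ f k <> None).

Definition has_ctrace (s : St) (c0 : K) (f : nat -> option (Act * K)) : Prop :=
  exists p, is_path s p /\ ctrace s p c0 f.

Definition has_div_ctrace (s : St) (c0 : K) (f : nat -> option (Act * K)) : Prop :=
  exists p, is_path s p /\ infinite_path p /\ ctrace s p c0 f /\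
            exists k, f k = None.

Definition consistent : Prop :=
  forall s t, C s = C t ->
    forall c0 f, has_ctrace s c0 f <-> has_ctrace t c0 f.

Definition div_preserving : Prop :=
  forall s t, C s = C t ->
    forall c0 f, has_div_ctrace s c0 f <-> has_div_ctrace t c0 f.
End Colour.

Definition bbisim_div (s t : St) : Prop :=
  exists (K : Type) (C : St -> K),
    consistent C /\ div_preserving C /\ C s = C t.

Definition is_merge (m : St -> St -> St) : Prop :=
  forall s t u a,
    step (m s t) a u <->
    (exists s', step s a s' /\ u = m s' t) \/ (exists t', step t a t' /\ u = m s t').

End LTS.

(* Main.v *)
Require Import Defs.
From Stdlib Require Import Arith PeanoNat List Lia Relations ClassicalEpsilon Classical FunctionalExtensionality PropExtensionality.
Import ListNotations.
Set Implicit Arguments.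

Section Gen.
Variables (Act : Type) (tau : Act) (St : Type) (step : St -> Act -> St -> Prop).

Lemma mono_le (h : nat -> nat) : (forall n, h n <= h (S n)) -> forall n m, n <= m -> h n <= h m.
Proof. intros H n m Hnm. induction Hnm; [lia|]. specialize (H m). lia. Qed.

Lemma tt (K : Type) (C : St -> K) x y (p q : nat -> option (Act * St)) (h : nat -> nat) c0 f :
  C x = C y -> (forall n, h n <= h (S n)) ->
  (forall n, observable tau C x p n -> exists a x' y', p n = Some (a, x') /\ h n < h (S n) /\
       q (pred (h (S n))) = Some (a, y') /\ C y' = C x' /\ observable tau C y q (pred (h (S n)))) ->
  (forall j, observable tau C y q j -> exists n, observable tau C x p n /\ S j = h (S n)) ->
  ctrace tau C x p c0 f -> ctrace tau C y q c0 f.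
Proof.
  intros Hxy Hm H2 H3 [Hc0 [Hf [g [Hg [Hgf Hgo]]]]].
  split; [congruence|]. split; [exact Hf|].
  exists (fun k => match f k with Some _ => pred (h (S (g k))) | None => pred (h (S (g k))) + k + 1 end).
  split; [|split].
  - intro k.
    assert (Hmon : h (S (g k)) <= h (g (S k))) by (apply mono_le; [exact Hm| specialize (Hg k); lia]).
    assert (Hmon2 : h (g (S k)) <= h (S (g (S k)))) by apply Hm.
    destruct (f (S k)) as [ac|] eqn:E1.
    + destruct (f k) as [ac0|] eqn:E0.
      * destruct (Hgf (S k) ac E1) as [Ho _].
        destruct (H2 _ Ho) as (a & x' & y' & _ & Hlt & _).
        destruct (Hgf k ac0 E0) as [Ho0 _].
        destruct (H2 _ Ho0) as (a0 & x0' & y0' & _ & Hlt0 & _). lia.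
      * rewrite (Hf k E0) in E1; discriminate.
    + destruct (f k); lia.
  - intros k ac Hk. rewrite Hk.
    destruct (Hgf k ac Hk) as [Ho (x0 & Hp & Hc)].
    destruct (H2 _ Ho) as (a & x' & y' & Hp' & Hlt & Hq & Hcy & Hoq).
    rewrite Hp in Hp'. injection Hp' as <- <-.
    split; [exact Hoq|]. exists y'. split; [exact Hq|]. congruence.
  - intros j Hoj. destruct (H3 j Hoj) as (n & Hon & Hj).
    destruct (Hgo n Hon) as (k & Hk & Hfk). exists k.
    destruct (f k) eqn:E; [|congruence]. split; [|congruence]. rewrite Hk. lia.
Qed.

Section Col.
Variables (K : Type) (C : St -> K).

Fixpoint tchain (y : St) (ts : list St) : Prop :=
  match ts with
  | nil => True
  | t :: ts' => step y tau t /\ C t = C y /\ tchain t ts'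
  end.

Lemma last_cons' (A : Type) (t0 : A) ts y : last (t0 :: ts) y = last ts t0.
Proof.
  destruct ts as [|a ts]; [reflexivity|].
  change (last (a :: ts) y = last (a :: ts) t0).
  revert a. induction ts as [|b ts IH]; intros a; [reflexivity|].
  change (last (b :: ts) y = last (b :: ts) t0). apply IH.
Qed.

Lemma tchain_app y ts t : tchain y ts -> step (last ts y) tau t -> C t = C (last ts y) ->
  tchain y (ts ++ [t]).
Proof.
  revert y. induction ts as [|t0 ts IH]; intros y H1 H2 H3; rewrite ?last_cons' in *; simpl in *.
  - tauto.
  - destruct H1 as (A & B & D). split; [exact A|]. split; [exact B|].
    apply IH; auto.
Qed.

Lemma tchain_col y ts : tchain y ts -> C (last ts y) = C y.
Proof.
  revert y. induction ts as [|t0 ts IH]; intros y H; rewrite ?last_cons'; simpl in *; auto.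
  destruct H as (A & B & D). specialize (IH _ D). congruence.
Qed.

Definition DivIn (w : St) : Prop :=
  exists p, is_path step w p /\ infinite_path p /\ forall n, ~ observable tau C w p n.

Lemma not_obs_inert s p n a x : p n = Some (a, x) -> ~ observable tau C s p n ->
  a = tau /\ C x = C (pre s p n).
Proof.
  intros Hp Hn. apply NNPP. intro Hc. apply Hn. exists a, x. auto.
Qed.

Lemma prefix_chain z q N : is_path step z q ->
  (forall j, j < N -> q j <> None /\ ~ observable tau C z q j) ->
  exists ts, tchain z ts /\ last ts z = pre z q N.
Proof.
  intros [_ Hs] H. induction N as [|N IH].
  - exists nil. simpl. auto.
  - destruct IH as (ts & Ht & Hl). { intros j Hj. apply H. lia. }
    destruct (H N ltac:(lia)) as [Hq Ho].
    destruct (q N) as [[a t]|] eqn:E; [|congruence].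
    destruct (not_obs_inert E Ho) as [-> Hc].
    exists (ts ++ [t]). split.
    + apply tchain_app; auto; rewrite Hl; auto.
    + rewrite last_last. simpl. rewrite E. reflexivity.
Qed.

Lemma path_down s q (Hp : is_path step s q) : forall j k, j <= k -> q k <> None -> q j <> None.
Proof.
  destruct Hp as [Hd _]. intros j k Hjk. induction Hjk; [auto|].
  intro H. apply IHHjk. intro E. apply H. apply Hd. exact E.
Qed.

Lemma T_of_cons : consistent tau step C -> forall w z a w', C w = C z -> step w a w' ->
  (a = tau /\ C w' = C w) \/
  exists ts z2, tchain z ts /\ step (last ts z) a z2 /\ C z2 = C w'.
Proof.
  intros Hcons w z a w' Hwz Hst.
  destruct (classic (a = tau /\ C w' = C w)) as [Hi|Hni]; [left; exact Hi|right].
  set (p := fun n : nat => match n with 0 => Some (a, w') | _ => None end).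
  set (f := fun n : nat => match n with 0 => Some (a, C w') | _ => None end).
  assert (Ht : has_ctrace tau step C w (C w) f).
  { exists p. split.
    - split.
      + intros [|n] Hn; simpl in *; try discriminate; auto.
      + intros [|n] b x E; simpl in E; [|discriminate]. injection E as <- <-. exact Hst.
    - split; [reflexivity|]. split.
      + intros [|k] Hk; simpl in *; try discriminate; auto.
      + exists (fun k => k). split; [intro; lia|]. split.
        * intros [|k] ac E; simpl in E; [|discriminate]. injection E as <-. simpl.
          split. { exists a, w'. split; [reflexivity|]. simpl. exact Hni. }
          exists w'. auto.
        * intros [|n] Ho.
          -- exists 0. split; auto. simpl. discriminate.
          -- destruct Ho as (b & x & E & _). simpl in E. discriminate. }
  apply (Hcons w z Hwz) in Ht. destruct Ht as (q & Hq & Hc0 & Hf & g & Hg & Hgf & Hgo).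
  destruct (Hgf 0 (a, C w') eq_refl) as [Ho0 (z2 & Hq0 & Hcz)]. simpl in Hq0, Hcz.
  destruct (@prefix_chain z q (g 0) Hq) as (ts & Htc & Hl).
  { intros j Hj. split.
    - apply (path_down Hq) with (k := g 0); [lia|]. congruence.
    - intro Hoj. destruct (Hgo j Hoj) as (k & Hk & Hfk).
      destruct k; [lia|]. simpl in Hfk. congruence. }
  exists ts, z2. split; [exact Htc|]. split; [|congruence].
  rewrite Hl. destruct Hq as [_ Hs]. apply Hs. exact Hq0.
Qed.

Lemma D_of_dp : div_preserving tau step C -> forall w z, C w = C z -> DivIn w -> DivIn z.
Proof.
  intros Hdp w z Hwz (p & Hp & Hinf & Hno).
  assert (Ht : has_div_ctrace tau step C w (C w) (fun _ => None)).
  { exists p. split; [exact Hp|]. split; [exact Hinf|]. split; [|exists 0; reflexivity].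
    split; [reflexivity|]. split; [auto|]. exists (fun k => k). split; [intro; lia|]. split.
    - intros k ac E; discriminate.
    - intros n Ho. exfalso. exact (Hno n Ho). }
  apply (Hdp w z Hwz) in Ht. destruct Ht as (q & Hq & Hqi & (_ & _ & g & _ & _ & Hgo) & _).
  exists q. split; [exact Hq|]. split; [exact Hqi|].
  intros n Ho. destruct (Hgo n Ho) as (k & _ & Hk). apply Hk; reflexivity.
Qed.

Lemma DivIn_first w : DivIn w -> exists w', step w tau w' /\ C w' = C w.
Proof.
  intros (p & [_ Hs] & Hinf & Hno).
  destruct (p 0) as [[a t]|] eqn:E; [|exfalso; exact (Hinf 0 E)].
  destruct (not_obs_inert E (Hno 0)) as [-> Hc].
  exists t. split; [apply (Hs 0 _ _ E)|exact Hc].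
Qed.

Lemma inv_div (W : St -> Prop) :
  (forall w, W w -> exists w', step w tau w' /\ W w' /\ C w' = C w) ->
  forall w0, W w0 -> DivIn w0.
Proof.
  intros HW w0 H0.
  assert (Hex : forall w, exists w', W w -> step w tau w' /\ W w' /\ C w' = C w).
  { intro w. destruct (classic (W w)) as [Hw|Hw].
    - destruct (HW w Hw) as (w' & A). exists w'. auto.
    - exists w. tauto. }
  set (F := fun w => proj1_sig (constructive_indefinite_description _ (Hex w))).
  assert (HF : forall w, W w -> step w tau (F w) /\ W (F w) /\ C (F w) = C w).
  { intro w. unfold F. destruct (constructive_indefinite_description _ (Hex w)); auto. }
  assert (HWi : forall n, W (Nat.iter n F w0)).
  { induction n; simpl; auto. apply HF; auto. }
  set (p := fun n => Some (tau, Nat.iter (S n) F w0)).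
  assert (Hpre : forall n, pre w0 p n = Nat.iter n F w0) by (intros [|n]; reflexivity).
  exists p. split; [split|split].
  - intros n E; discriminate.
  - intros n a x E. unfold p in E. injection E as <- <-. rewrite Hpre. simpl. apply HF; auto.
  - intros n E; discriminate.
  - intros n (a & x & E & Hn). unfold p in E. injection E as <- <-. apply Hn. split; [auto|].
    rewrite Hpre. simpl. apply HF; auto.
Qed.

End Col.

Lemma pre_cons (b : Act) (t y0 : St) l o : o <= length l ->
  pre y0 (fun i => nth_error ((b, t) :: l) i) (S o) = pre t (fun i => nth_error l i) o.
Proof.
  intro Ho. destruct o as [|o]; [reflexivity|]. simpl.
  destruct (nth_error l o) as [[c u]|] eqn:E; [reflexivity|].
  apply nth_error_None in E. lia.
Qed.

Definition segl (ts : list St) (a : Act) (y2 : St) : list (Act * St) :=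
  map (fun t => (tau, t)) ts ++ [(a, y2)].

Lemma len_segl ts a y2 : length (segl ts a y2) = S (length ts).
Proof. unfold segl. rewrite length_app, length_map. simpl. lia. Qed.

Lemma segl_last ts a y2 : nth_error (segl ts a y2) (length ts) = Some (a, y2).
Proof. unfold segl. induction ts; simpl; auto. Qed.

Section SegC.
Variables (K : Type) (C : St -> K).

Lemma segl_inner y0 ts a y2 o : tchain C y0 ts -> o < length ts ->
  exists t, nth_error (segl ts a y2) o = Some (tau, t) /\ C t = C y0.
Proof.
  revert y0 o. induction ts as [|t ts IH]; intros y0 o Ht Ho; simpl in *; [lia|].
  destruct Ht as (A & B & D). destruct o as [|o].
  - exists t. auto.
  - destruct (IH t o D ltac:(lia)) as (t' & E & Hc). exists t'. split; [exact E|congruence].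
Qed.

Lemma segl_pre_col y0 ts a y2 o : tchain C y0 ts -> o <= length ts ->
  C (pre y0 (fun i => nth_error (segl ts a y2) i) o) = C y0.
Proof.
  revert y0 o. induction ts as [|t ts IH]; intros y0 o Ht Ho; simpl in *.
  - assert (o = 0) by lia. subst. reflexivity.
  - destruct Ht as (A & B & D). destruct o as [|o]; [reflexivity|].
    unfold segl in *. simpl map. rewrite <- app_comm_cons. rewrite pre_cons.
    + rewrite IH; auto. lia.
    + rewrite length_app, length_map. simpl. lia.
Qed.

Lemma segl_path y0 ts a y2 : tchain C y0 ts -> step (last ts y0) a y2 ->
  forall o b t, nth_error (segl ts a y2) o = Some (b, t) ->
  step (pre y0 (fun i => nth_error (segl ts a y2) i) o) b t.
Proof.
  revert y0. induction ts as [|t0 ts IH]; intros y0 Ht Hl o b t E.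
  - destruct o as [|o]; simpl in E.
    + injection E as <- <-. exact Hl.
    + destruct o; discriminate.
  - destruct Ht as (A & B & D). rewrite last_cons' in Hl.
    unfold segl in *. simpl map in *. rewrite <- app_comm_cons in *.
    destruct o as [|o].
    + simpl in E. injection E as <- <-. exact A.
    + rewrite pre_cons. { apply IH; auto. }
      assert (o < length (map (fun t1 : St => (tau, t1)) ts ++ [(a, y2)])); [|lia].
      apply nth_error_Some. simpl in E. congruence.
Qed.

End SegC.

Lemma segl_end y0 ts a y2 :
  pre y0 (fun i => nth_error (segl ts a y2) i) (S (length ts)) = y2.
Proof. simpl. rewrite segl_last. reflexivity. Qed.

Section Sim.
Local Unset Implicit Arguments.
Variables (K : Type) (C : St -> K) (Q : St -> St -> Prop).
Hypothesis Qc : forall x y, Q x y -> C x = C y.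
Hypothesis QT : forall x y a x', Q x y -> step x a x' ->
  (a = tau /\ Q x' y) \/ exists ts y2, tchain C y ts /\ step (last ts y) a y2 /\ Q x' y2.
Hypothesis QD : forall x y p, Q x y -> is_path step x p -> infinite_path p ->
  (forall n, exists t, p n = Some (tau, t)) -> (forall n, Q (pre x p n) y) -> DivIn C y.

Definition Spec y0 a x' (r : option (list St * St)) : Prop :=
  match r with
  | None => a = tau /\ Q x' y0
  | Some (ts, y2) => tchain C y0 ts /\ step (last ts y0) a y2 /\ Q x' y2
  end.

Lemma F_ex x0 y0 a x' : exists r, Q x0 y0 -> step x0 a x' -> Spec y0 a x' r.
Proof.
  destruct (classic (Q x0 y0 /\ step x0 a x')) as [[H1 H2]|H].
  - destruct (QT _ _ _ _ H1 H2) as [A|(ts & y2 & B)].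
    + exists None. auto.
    + exists (Some (ts, y2)). auto.
  - exists None. tauto.
Qed.

Definition Fc x0 y0 a x' := proj1_sig (constructive_indefinite_description _ (F_ex x0 y0 a x')).

Lemma Fc_spec x0 y0 a x' : Q x0 y0 -> step x0 a x' -> Spec y0 a x' (Fc x0 y0 a x').
Proof. unfold Fc. destruct (constructive_indefinite_description _ _); auto. Qed.

Section Path.
Variables (x y : St) (p : nat -> option (Act * St)).
Hypothesis Hxy : Q x y.
Hypothesis Hp : is_path step x p.

Fixpoint ys n : St :=
  match n with
  | 0 => y
  | S n' => match p n' with
            | None => ys n'
            | Some (a, x') => match Fc (pre x p n') (ys n') a x' with
                              | None => ys n'
                              | Some (_, y2) => y2
                              end
            end
  end.

Definition seg n : list (Act * St) :=
  match p n with
  | None => []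
  | Some (a, x') => match Fc (pre x p n) (ys n) a x' with
                    | None => []
                    | Some (ts, y2) => segl ts a y2
                    end
  end.

Fixpoint h n : nat := match n with 0 => 0 | S n' => h n' + length (seg n') end.

Lemma Qall n : (forall j, j < n -> p j <> None) -> Q (pre x p n) (ys n).
Proof.
  induction n as [|n IH]; intros H; [exact Hxy|].
  specialize (IH (fun j Hj => H j ltac:(lia))).
  destruct (p n) as [[a x']|] eqn:E; [|exfalso; exact (H n ltac:(lia) E)].
  assert (Hs : step (pre x p n) a x') by (apply (proj2 Hp); exact E).
  pose proof (Fc_spec _ _ _ _ IH Hs) as Sp.
  simpl. rewrite E. destruct (Fc (pre x p n) (ys n) a x') as [[ts y2]|]; simpl in Sp; tauto.
Qed.

Lemma Qinv n : p n <> None -> Q (pre x p n) (ys n).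
Proof.
  intro H. apply Qall. intros j Hj. apply (path_down Hp) with (k := n); auto. lia.
Qed.

Lemma seg_cases n :
  (seg n = [] /\ ys (S n) = ys n /\
     forall a x', p n = Some (a, x') -> a = tau /\ Q x' (ys n) /\ Q (pre x p n) (ys n)) \/
  (exists a x' ts y2, p n = Some (a, x') /\ seg n = segl ts a y2 /\ ys (S n) = y2 /\
     tchain C (ys n) ts /\ step (last ts (ys n)) a y2 /\ Q x' y2 /\ Q (pre x p n) (ys n)).
Proof.
  unfold seg. simpl. destruct (p n) as [[a x']|] eqn:E.
  - assert (Hq : Q (pre x p n) (ys n)) by (apply Qinv; congruence).
    assert (Hs : step (pre x p n) a x') by (apply (proj2 Hp); exact E).
    pose proof (Fc_spec _ _ _ _ Hq Hs) as Sp.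
    destruct (Fc (pre x p n) (ys n) a x') as [[ts y2]|]; simpl in Sp.
    + right. exists a, x', ts, y2. tauto.
    + left. split; [auto|]. split; [auto|]. intros a0 x0 E0. injection E0 as <- <-. tauto.
  - left. split; [auto|]. split; [auto|]. intros; discriminate.
Qed.

Lemma h_mono n : h n <= h (S n).
Proof. simpl. lia. Qed.

Lemma h_le n m : n <= m -> h n <= h m.
Proof. apply mono_le. exact h_mono. Qed.

Lemma interval_uniq n n' j : h n <= j < h (S n) -> h n' <= j < h (S n') -> n = n'.
Proof.
  intros H1 H2. destruct (lt_eq_lt_dec n n') as [[Hl|Hl]|Hl]; auto.
  - pose proof (@h_le (S n) n' ltac:(lia)). lia.
  - pose proof (@h_le (S n') n ltac:(lia)). lia.
Qed.

Lemma cover j n : j < h n -> exists n', h n' <= j < h (S n').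
Proof.
  induction n as [|n IH]; intros H; simpl in H; [lia|].
  destruct (Nat.lt_ge_cases j (h n)) as [H1|H1]; auto.
  exists n. simpl. lia.
Qed.

Definition q1 (j : nat) : option (Act * St) :=
  match excluded_middle_informative (exists n, h n <= j < h (S n)) with
  | left H => let n := proj1_sig (constructive_indefinite_description _ H) in
              nth_error (seg n) (j - h n)
  | right _ => None
  end.

Lemma q1_in n j : h n <= j < h (S n) -> q1 j = nth_error (seg n) (j - h n).
Proof.
  intro H. unfold q1. destruct (excluded_middle_informative _) as [H'|H'].
  - destruct (constructive_indefinite_description _ H') as [n' Hn']. simpl.
    rewrite (@interval_uniq n' n j Hn' H). reflexivity.
  - exfalso. apply H'. exists n. exact H.
Qed.

Lemma q1_some j n : j < h n -> q1 j <> None.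
Proof.
  intro H. destruct (cover j n H) as (n' & Hn'). rewrite (q1_in n' j Hn').
  apply nth_error_Some. simpl in Hn'. lia.
Qed.

Lemma q1_none j : (forall n, h n <= j) -> q1 j = None.
Proof.
  intro H. unfold q1. destruct (excluded_middle_informative _) as [(n & Hn)|H']; auto.
  specialize (H (S n)). lia.
Qed.

Lemma q1_none_inv j : q1 j = None -> forall n, h n <= j.
Proof.
  intros E n. destruct (Nat.lt_ge_cases j (h n)) as [H|H]; auto.
  exfalso. exact (q1_some j n H E).
Qed.

Lemma pre_q1_S n o : o < length (seg n) ->
  pre y q1 (h n + S o) = pre (ys n) (fun i => nth_error (seg n) i) (S o).
Proof.
  intro Ho. replace (h n + S o) with (S (h n + o)) by lia. simpl.
  rewrite (q1_in n (h n + o)) by (simpl; lia). replace (h n + o - h n) with o by lia.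
  destruct (nth_error (seg n) o) as [[c u]|] eqn:E; [reflexivity|].
  apply nth_error_None in E. lia.
Qed.

Lemma pre_q1_h n : pre y q1 (h n) = ys n.
Proof.
  induction n as [|n IH]; [reflexivity|].
  destruct (seg_cases n) as [(E & Ey & _)|(a & x' & ts & y2 & Ep & E & Ey & _)].
  - change (h (S n)) with (h n + length (seg n)). rewrite E, Ey. cbn [length]. rewrite Nat.add_0_r. exact IH.
  - change (h (S n)) with (h n + length (seg n)). rewrite E, len_segl. rewrite pre_q1_S by (rewrite E, len_segl; lia).
    rewrite E, segl_end. congruence.
Qed.

Lemma pre_q1_off n o : o <= length (seg n) ->
  pre y q1 (h n + o) = pre (ys n) (fun i => nth_error (seg n) i) o.
Proof.
  intro Ho. destruct o as [|o].
  - rewrite Nat.add_0_r, pre_q1_h. reflexivity.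
  - apply pre_q1_S. lia.
Qed.

Lemma q1_interval j : q1 j <> None -> exists n, h n <= j < h (S n).
Proof.
  intro E. destruct (classic (exists n, j < h n)) as [(n & Hn)|H].
  - exact (cover j n Hn).
  - exfalso. apply E. apply q1_none. intro n. destruct (Nat.lt_ge_cases j (h n)); auto.
    exfalso; apply H; eauto.
Qed.

Lemma q1_path : is_path step y q1.
Proof.
  split.
  - intros j E. apply q1_none. intro n. pose proof (q1_none_inv j E n). lia.
  - intros j a t E.
    destruct (q1_interval j ltac:(congruence)) as (n & Hn).
    rewrite (q1_in n j Hn) in E.
    destruct (seg_cases n) as [(Es & _)|(a0 & x' & ts & y2 & Ep & Es & Ey & Htc & Hst & _)].
    + simpl in Hn. rewrite Es in Hn. simpl in Hn. lia.
    + replace j with (h n + (j - h n)) by lia.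
      rewrite pre_q1_off by (simpl in Hn; lia).
      rewrite Es in E |- *. eapply segl_path; eauto.
Qed.

Lemma H2_q1 n : observable tau C x p n -> exists a x' y', p n = Some (a, x') /\ h n < h (S n) /\
       q1 (pred (h (S n))) = Some (a, y') /\ C y' = C x' /\ observable tau C y q1 (pred (h (S n))).
Proof.
  intros (a & x' & Ep & Hn).
  destruct (seg_cases n) as [(Es & _ & Hst)|(a0 & x0 & ts & y2 & Ep' & Es & Ey & Htc & Hs & Hq2 & Hq)].
  - exfalso. destruct (Hst a x' Ep) as (Ha & Hq1 & Hq2). apply Hn. split; [exact Ha|].
    rewrite (Qc _ _ Hq1), (Qc _ _ Hq2). reflexivity.
  - rewrite Ep in Ep'. injection Ep' as <- <-.
    assert (Hh : h (S n) = h n + S (length ts)) by (simpl; rewrite Es, len_segl; reflexivity).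
    rewrite Hh. replace (pred (h n + S (length ts))) with (h n + length ts) by lia.
    assert (Eq : q1 (h n + length ts) = Some (a, y2)).
    { rewrite (q1_in n (h n + length ts)) by lia. replace (h n + length ts - h n) with (length ts) by lia.
      rewrite Es. apply segl_last. }
    exists a, x', y2. split; [exact Ep|]. split; [lia|]. split; [exact Eq|].
    split; [symmetry; apply Qc; exact Hq2|].
    exists a, y2. split; [exact Eq|]. intros [Ha Hc]. apply Hn. split; [exact Ha|].
    rewrite pre_q1_off in Hc by (rewrite Es, len_segl; lia).
    rewrite Es in Hc. rewrite segl_pre_col in Hc by (auto; lia).
    rewrite (Qc _ _ Hq2), (Qc _ _ Hq). exact Hc.
Qed.

Lemma H3_q1 j : observable tau C y q1 j -> exists n, observable tau C x p n /\ S j = h (S n).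
Proof.
  intros (b & t & E & Hn).
  destruct (q1_interval j ltac:(congruence)) as (n & Hin).
  rewrite (q1_in n j Hin) in E.
  destruct (seg_cases n) as [(Es & _)|(a & x' & ts & y2 & Ep & Es & Ey & Htc & Hs & Hq2 & Hq)].
  - simpl in Hin. rewrite Es in Hin. simpl in Hin. lia.
  - assert (Hh : h (S n) = h n + S (length ts)) by (simpl; rewrite Es, len_segl; reflexivity).
    assert (Hpc : C (pre y q1 j) = C (ys n)).
    { replace j with (h n + (j - h n)) by lia. rewrite pre_q1_off by (rewrite Es, len_segl; lia).
      rewrite Es. apply segl_pre_col; auto. lia. }
    destruct (Nat.lt_ge_cases (j - h n) (length ts)) as [Hl|Hl].
    + exfalso. destruct (segl_inner C (ys n) ts a y2 Htc Hl) as (t' & E' & Hc').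
      rewrite Es, E' in E. injection E as <- <-. apply Hn. split; [reflexivity|]. congruence.
    + assert (j - h n = length ts) by lia.
      rewrite Es, H, segl_last in E. injection E as <- <-.
      exists n. split; [|lia].
      exists a, x'. split; [exact Ep|]. intros [Ha Hc]. apply Hn. split; [exact Ha|].
      rewrite Hpc, <- (Qc _ _ Hq), <- Hc. symmetry. apply Qc. exact Hq2.
Qed.

Lemma sim_ctrace c0 f : ctrace tau C x p c0 f -> ctrace tau C y q1 c0 f.
Proof.
  apply tt with (h := h).
  - apply Qc; exact Hxy.
  - exact h_mono.
  - exact H2_q1.
  - exact H3_q1.
Qed.

Lemma stab B : forall n0, (forall n, h n <= h n0 + B) -> exists M, forall n, M <= n -> h n = h M.
Proof.
  induction B as [|B IH]; intros n0 H.
  - exists n0. intros n Hn. pose proof (h_le n0 n Hn). specialize (H n). lia.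
  - destruct (classic (forall n, n0 <= n -> h n = h n0)) as [A|A]; [exists n0; exact A|].
    apply not_all_ex_not in A. destruct A as (n1 & A).
    apply imply_to_and in A. destruct A as [A1 A2].
    pose proof (h_le n0 n1 A1).
    apply (IH n1). intro n. specialize (H n). lia.
Qed.

Section Div.
Hypothesis Hinf : infinite_path p.
Variable M : nat.
Hypothesis HM : forall n, M <= n -> h n = h M.

Lemma tail_st n : M <= n -> ys n = ys M /\ (exists t, p n = Some (tau, t)) /\ Q (pre x p n) (ys M).
Proof.
  induction n as [|n IH]; intro Hn.
  - assert (M = 0) by lia. subst M. split; [reflexivity|].
    destruct (p 0) as [[a t]|] eqn:E; [|exfalso; exact (Hinf 0 E)].
    destruct (seg_cases 0) as [(Es & _ & Hst)|(a0 & x0 & ts & y2 & Ep & Es & _)].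
    + destruct (Hst a t E) as (-> & _ & Hq). split; [eauto|exact Hq].
    + exfalso. pose proof (HM 1 ltac:(lia)). simpl in H. rewrite Es, len_segl in H. lia.
  - assert (Hys : ys (S n) = ys M).
    { destruct (Nat.eq_dec M (S n)) as [<-|Hne]; [reflexivity|].
      destruct (IH ltac:(lia)) as (Hy & _).
      destruct (seg_cases n) as [(Es & Ey & _)|(a0 & x0 & ts & y2 & Ep & Es & _)].
      + congruence.
      + exfalso. pose proof (HM (S n) ltac:(lia)). pose proof (HM n ltac:(lia)).
        simpl in H. rewrite Es, len_segl in H. lia. }
    split; [exact Hys|].
    destruct (p (S n)) as [[a t]|] eqn:E; [|exfalso; exact (Hinf (S n) E)].
    destruct (seg_cases (S n)) as [(Es & _ & Hst)|(a0 & x0 & ts & y2 & Ep & Es & _)].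
    + destruct (Hst a t E) as (-> & _ & Hq). rewrite Hys in Hq. split; [eauto|exact Hq].
    + exfalso. pose proof (HM (S (S n)) ltac:(lia)). pose proof (HM (S n) ltac:(lia)).
      simpl in H, H0. rewrite Es, len_segl in H. lia.
Qed.

Lemma div_tail : DivIn C (ys M).
Proof.
  set (x' := pre x p M). set (p' := fun k => p (M + k)).
  assert (Hpre : forall k, pre x' p' k = pre x p (M + k)).
  { intros [|k]; [unfold x'; rewrite Nat.add_0_r; reflexivity|].
    simpl. unfold p'. rewrite Nat.add_succ_r. simpl.
    destruct (p (M + k)) as [[a t]|] eqn:E; [reflexivity|exfalso; exact (Hinf _ E)]. }
  apply (QD x' (ys M) p').
  - destruct (tail_st M (le_n M)) as (_ & _ & Hq). exact Hq.
  - split.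
    + intros k E. exfalso. exact (Hinf _ E).
    + intros k a t E. rewrite Hpre. apply (proj2 Hp). exact E.
  - intros k E. exact (Hinf _ E).
  - intro k. destruct (tail_st (M + k) ltac:(lia)) as (_ & Ht & _). exact Ht.
  - intro k. rewrite Hpre. destruct (tail_st (M + k) ltac:(lia)) as (_ & _ & Hq). exact Hq.
Qed.

Variable r : nat -> option (Act * St).
Hypothesis Hr : is_path step (ys M) r.
Hypothesis Hri : infinite_path r.
Hypothesis Hrn : forall n, ~ observable tau C (ys M) r n.

Definition qg (j : nat) := if j <? h M then q1 j else r (j - h M).

Lemma q1_beyond j : h M <= j -> q1 j = None.
Proof.
  intro H. apply q1_none. intro n. destruct (Nat.le_ge_cases n M) as [A|A].
  - pose proof (h_le n M A). lia.
  - rewrite (HM n A). exact H.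
Qed.

Lemma pre_qg_le j : j <= h M -> pre y qg j = pre y q1 j.
Proof.
  destruct j as [|j]; [reflexivity|]. intro H. simpl. unfold qg.
  replace (j <? h M) with true by (symmetry; apply Nat.ltb_lt; lia). reflexivity.
Qed.

Lemma pre_qg_ge k : pre y qg (h M + k) = pre (ys M) r k.
Proof.
  destruct k as [|k].
  - rewrite Nat.add_0_r, pre_qg_le by lia. apply pre_q1_h.
  - rewrite Nat.add_succ_r. simpl. unfold qg.
    replace (h M + k <? h M) with false by (symmetry; apply Nat.ltb_ge; lia).
    replace (h M + k - h M) with k by lia.
    destruct (r k) as [[a t]|] eqn:E; [reflexivity|exfalso; exact (Hri k E)].
Qed.

Lemma qg_inf : infinite_path qg.
Proof.
  intros j. unfold qg. destruct (j <? h M) eqn:E.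
  - apply Nat.ltb_lt in E. apply (q1_some j M E).
  - apply Hri.
Qed.

Lemma qg_path : is_path step y qg.
Proof.
  split.
  - intros j E. exfalso. exact (qg_inf j E).
  - intros j a t E. unfold qg in E. destruct (j <? h M) eqn:Ej.
    + apply Nat.ltb_lt in Ej. rewrite pre_qg_le by lia. apply (proj2 q1_path). exact E.
    + apply Nat.ltb_ge in Ej. replace j with (h M + (j - h M)) by lia.
      rewrite pre_qg_ge. apply (proj2 Hr). exact E.
Qed.

Lemma obs_qg_lt j : j < h M -> (observable tau C y qg j <-> observable tau C y q1 j).
Proof.
  intro H. unfold observable. rewrite pre_qg_le by lia. unfold qg.
  replace (j <? h M) with true by (symmetry; apply Nat.ltb_lt; lia). tauto.
Qed.

Lemma obs_qg_ge j : h M <= j -> ~ observable tau C y qg j.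
Proof.
  intros H Ho. apply (Hrn (j - h M)). destruct Ho as (a & t & E & Hn).
  exists a, t. unfold qg in E. replace (j <? h M) with false in E by (symmetry; apply Nat.ltb_ge; lia).
  split; [exact E|]. rewrite <- pre_qg_ge. replace (h M + (j - h M)) with j by lia. exact Hn.
Qed.

Lemma sim_ctrace_g c0 f : ctrace tau C x p c0 f -> ctrace tau C y qg c0 f.
Proof.
  apply tt with (h := h).
  - apply Qc; exact Hxy.
  - exact h_mono.
  - intros n Ho. destruct (H2_q1 n Ho) as (a & x' & y' & Ep & Hl & Eq & Hc & Hoq).
    assert (Hlt : pred (h (S n)) < h M).
    { destruct (Nat.lt_ge_cases (pred (h (S n))) (h M)) as [A|A]; auto.
      rewrite (q1_beyond _ A) in Eq. discriminate. }
    exists a, x', y'. split; [exact Ep|]. split; [exact Hl|].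
    split; [unfold qg; replace (pred (h (S n)) <? h M) with true by (symmetry; apply Nat.ltb_lt; lia); exact Eq|].
    split; [exact Hc|]. apply obs_qg_lt; auto.
  - intros j Ho. destruct (Nat.lt_ge_cases j (h M)) as [A|A].
    + apply H3_q1. apply obs_qg_lt; auto.
    + exfalso. exact (obs_qg_ge j A Ho).
Qed.

End Div.

End Path.

Lemma sim_has x y c0 f : Q x y -> has_ctrace tau step C x c0 f -> has_ctrace tau step C y c0 f.
Proof.
  intros Hq (p & Hp & Ht). exists (q1 x y p). split.
  - apply q1_path; auto.
  - apply sim_ctrace; auto.
Qed.

Lemma sim_div x y c0 f : Q x y -> has_div_ctrace tau step C x c0 f -> has_div_ctrace tau step C y c0 f.
Proof.
  intros Hq (p & Hp & Hinf & Ht & Hk).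
  destruct (classic (exists N0, forall n, h x y p n <= N0)) as [(N0 & HN)|HN].
  - assert (HB : forall n, h x y p n <= h x y p 0 + N0) by (intro n; simpl; specialize (HN n); lia).
    destruct (stab x y p N0 0 HB) as (M & HM).
    destruct (div_tail x y p Hq Hp Hinf M HM) as (r & Hr & Hri & Hrn).
    exists (qg x y p M r). split; [apply qg_path; auto|]. split; [apply qg_inf; auto|].
    split; [|exact Hk]. eapply sim_ctrace_g; eauto.
  - exists (q1 x y p). split; [apply q1_path; auto|]. split.
    + intro j. destruct (classic (exists n, j < h x y p n)) as [(n & Hn)|H'].
      * exact (q1_some x y p j n Hn).
      * exfalso. apply HN. exists j. intro n.
        destruct (Nat.lt_ge_cases j (h x y p n)) as [A|A]; [exfalso; eauto|exact A].
    + split; [|exact Hk]. apply sim_ctrace; auto.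
Qed.

End Sim.

Lemma last_map' (A B : Type) (g : A -> B) l d : last (map g l) (g d) = g (last l d).
Proof.
  revert d. induction l as [|a l IH]; intro d; [reflexivity|].
  simpl map. rewrite !last_cons'. apply IH.
Qed.

Section Inst.
Local Unset Implicit Arguments.
Variables (m : St -> St -> St) (Hm : is_merge step m).
Variables (K1 K2 : Type) (C1 : St -> K1) (C2 : St -> K2).
Hypotheses (Hc1 : consistent tau step C1) (Hd1 : div_preserving tau step C1).
Hypotheses (Hc2 : consistent tau step C2) (Hd2 : div_preserving tau step C2).

Definition R0 (x y : St) : Prop :=
  exists a b c d, x = m a c /\ y = m b d /\ C1 a = C1 b /\ C2 c = C2 d.
Definition E := clos_refl_sym_trans St R0.
Definition CE (w : St) : St -> Prop := fun z => E w z.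

Lemma R0_sym x y : R0 x y -> R0 y x.
Proof. intros (a & b & c & d & A & B & D & F). exists b, a, d, c. auto. Qed.

Lemma CE_eq w z : E w z -> CE w = CE z.
Proof.
  intro H. apply functional_extensionality. intro u. apply propositional_extensionality.
  unfold CE. split; intro H'.
  - apply rst_trans with w; auto. apply rst_sym; auto.
  - apply rst_trans with z; auto.
Qed.

Lemma CE_R0 w z : R0 w z -> CE w = CE z.
Proof. intro H. apply CE_eq. apply rst_step. exact H. Qed.

Lemma CE_E w z : CE w = CE z -> E w z.
Proof.
  intro H. assert (A : CE z z) by apply rst_refl. rewrite <- H in A. exact A.
Qed.

Lemma mstepL a c al a' : step a al a' -> step (m a c) al (m a' c).
Proof. intro H. apply (proj2 (Hm a c (m a' c) al)). left. eauto. Qed.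

Lemma mstepR a c al c' : step c al c' -> step (m a c) al (m a c').
Proof. intro H. apply (proj2 (Hm a c (m a c') al)). right. eauto. Qed.

Lemma tchain_mapL b d ts : tchain C1 b ts -> tchain CE (m b d) (map (fun t => m t d) ts).
Proof.
  revert b. induction ts as [|t ts IH]; intros b H; simpl in *; auto.
  destruct H as (A & B & D). split; [apply mstepL; auto|]. split; [|auto].
  apply CE_R0. exists t, b, d, d. auto.
Qed.

Lemma tchain_mapR b d ts : tchain C2 d ts -> tchain CE (m b d) (map (fun t => m b t) ts).
Proof.
  revert d. induction ts as [|t ts IH]; intros d H; simpl in *; auto.
  destruct H as (A & B & D). split; [apply mstepR; auto|]. split; [|auto].
  apply CE_R0. exists b, b, t, d. auto.
Qed.

Lemma QT0 x y al x' : R0 x y -> step x al x' ->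
  (al = tau /\ R0 x' y) \/ exists ts y2, tchain CE y ts /\ step (last ts y) al y2 /\ R0 x' y2.
Proof.
  intros (a & b & c & d & -> & -> & H1 & H2) Hs.
  apply Hm in Hs. destruct Hs as [(a' & Ha & ->)|(c' & Hc & ->)].
  - destruct (T_of_cons Hc1 b H1 Ha) as [[Ht Hcol]|(ts & b2 & Htc & Hst & Hcol)].
    + left. split; [exact Ht|]. exists a', b, c, d. repeat split; auto. congruence.
    + right. exists (map (fun t => m t d) ts), (m b2 d). split; [apply tchain_mapL; auto|].
      split.
      * rewrite (last_map' (fun t => m t d)). apply mstepL. exact Hst.
      * exists a', b2, c, d. auto.
  - destruct (T_of_cons Hc2 d H2 Hc) as [[Ht Hcol]|(ts & d2 & Htc & Hst & Hcol)].
    + left. split; [exact Ht|]. exists a, b, c', d. repeat split; auto. congruence.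
    + right. exists (map (fun t => m b t) ts), (m b d2). split; [apply tchain_mapR; auto|].
      split.
      * rewrite (last_map' (fun t => m b t)). apply mstepR. exact Hst.
      * exists a, b, c', d2. auto.
Qed.

Lemma QD0 x y p : R0 x y -> is_path step x p -> infinite_path p ->
  (forall n, exists t, p n = Some (tau, t)) -> (forall n, R0 (pre x p n) y) -> DivIn CE y.
Proof.
  intros Hxy Hp Hinf Htau Hall.
  set (W := fun z => exists n, R0 (pre x p n) z).
  assert (HWc : forall z, W z -> CE z = CE y).
  { intros z (n & Hn). rewrite <- (CE_R0 _ _ Hn). apply CE_R0. apply Hall. }
  apply (inv_div CE W); [|exists 0; exact Hxy].
  intros z Hz.
  cut (exists z', step z tau z' /\ W z').
  { intros (z' & A & B). exists z'. split; [exact A|]. split; [exact B|].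
    rewrite (HWc _ B), (HWc _ Hz). reflexivity. }
  apply NNPP. intro Hno.
  destruct Hz as (n0 & a0 & b & c0 & d & Ex0 & Ez & H1 & H2).
  set (G := fun n a c => pre x p n = m a c /\ C1 a = C1 b /\ C2 c = C2 d).
  assert (NoW : forall z', step z tau z' -> W z' -> False) by (intros z' A B; apply Hno; eauto).
  assert (Gclos : forall n a c, G n a c -> exists a' c', G (S n) a' c' /\
            ((step a tau a' /\ c' = c) \/ (a' = a /\ step c tau c'))).
  { intros n a c (Hg & Ha & Hc).
    destruct (Htau n) as (t & Et).
    assert (Hs : step (m a c) tau t) by (rewrite <- Hg; apply (proj2 Hp); exact Et).
    assert (Hpre : pre x p (S n) = t) by (simpl; rewrite Et; reflexivity).
    apply Hm in Hs. destruct Hs as [(a' & Ha' & ->)|(c' & Hc' & ->)].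
    - destruct (T_of_cons Hc1 b Ha Ha') as [[_ Hcol]|(ts & b2 & Htc & Hst & Hcol)].
      + exists a', c. split; [|left; auto]. split; [exact Hpre|]. split; [congruence|exact Hc].
      + exfalso. destruct ts as [|t1 ts'].
        * simpl in Hst. apply (NoW (m b2 d)); [rewrite Ez; apply mstepL; exact Hst|].
          exists (S n). rewrite Hpre. exists a', b2, c, d. auto.
        * simpl in Htc. destruct Htc as (A & B & _).
          apply (NoW (m t1 d)); [rewrite Ez; apply mstepL; exact A|].
          exists n. rewrite Hg. exists a, t1, c, d. repeat split; auto. congruence.
    - destruct (T_of_cons Hc2 d Hc Hc') as [[_ Hcol]|(ts & d2 & Htc & Hst & Hcol)].
      + exists a, c'. split; [|right; auto]. split; [exact Hpre|]. split; [exact Ha|congruence].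
      + exfalso. destruct ts as [|t1 ts'].
        * simpl in Hst. apply (NoW (m b d2)); [rewrite Ez; apply mstepR; exact Hst|].
          exists (S n). rewrite Hpre. exists a, b, c', d2. auto.
        * simpl in Htc. destruct Htc as (A & B & _).
          apply (NoW (m b t1)); [rewrite Ez; apply mstepR; exact A|].
          exists n. rewrite Hg. exists a, b, c, t1. repeat split; auto. congruence. }
  assert (NoB : forall b', step b tau b' -> C1 b' = C1 b -> False).
  { intros b' A B. apply (NoW (m b' d)); [rewrite Ez; apply mstepL; exact A|].
    exists n0. rewrite Ex0. exists a0, b', c0, d. repeat split; auto. congruence. }
  assert (NoD : forall d', step d tau d' -> C2 d' = C2 d -> False).
  { intros d' A B. apply (NoW (m b d')); [rewrite Ez; apply mstepR; exact A|].
    exists n0. rewrite Ex0. exists a0, b, c0, d'. repeat split; auto. congruence. }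
  set (W1 := fun a => exists n c, G n a c).
  destruct (classic (forall a, W1 a -> exists a', step a tau a' /\ W1 a' /\ C1 a' = C1 a)) as [Phi|Phi].
  - assert (D1 : DivIn C1 a0) by (apply (inv_div C1 W1 Phi); exists n0, c0; split; auto).
    apply (D_of_dp Hd1 b H1) in D1. destruct (DivIn_first D1) as (b' & A & B). exact (NoB b' A B).
  - apply not_all_ex_not in Phi. destruct Phi as (as_ & Phi).
    apply imply_to_and in Phi. destruct Phi as [(ns & cs & Hgs) Phi].
    set (W2 := fun c => exists n, G n as_ c).
    assert (D2 : DivIn C2 cs).
    { apply (inv_div C2 W2); [|exists ns; exact Hgs].
      intros c (n & Hg). destruct (Gclos n as_ c Hg) as (a' & c' & Hg' & [(A & ->)|(-> & A)]).
      - exfalso. apply Phi. exists a'. split; [exact A|]. split; [exists (S n), c; exact Hg'|].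
        destruct Hg as (_ & B & _). destruct Hg' as (_ & B' & _). congruence.
      - exists c'. split; [exact A|]. split; [exists (S n); exact Hg'|].
        destruct Hg as (_ & _ & B). destruct Hg' as (_ & _ & B'). congruence. }
    destruct Hgs as (_ & _ & Hcs).
    apply (D_of_dp Hd2 d Hcs) in D2. destruct (DivIn_first D2) as (d' & A & B). exact (NoD d' A B).
Qed.

Lemma E_traces x y : E x y -> forall c0 f,
  (has_ctrace tau step CE x c0 f <-> has_ctrace tau step CE y c0 f) /\
  (has_div_ctrace tau step CE x c0 f <-> has_div_ctrace tau step CE y c0 f).
Proof.
  induction 1 as [x y H| x | x y _ IH | x y z _ IH1 _ IH2]; intros c0 f.
  - split; split; intro T.
    + exact (sim_has _ CE R0 CE_R0 QT0 x y c0 f H T).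
    + exact (sim_has _ CE R0 CE_R0 QT0 y x c0 f (R0_sym x y H) T).
    + exact (sim_div _ CE R0 CE_R0 QT0 QD0 x y c0 f H T).
    + exact (sim_div _ CE R0 CE_R0 QT0 QD0 y x c0 f (R0_sym x y H) T).
  - tauto.
  - specialize (IH c0 f). tauto.
  - specialize (IH1 c0 f). specialize (IH2 c0 f). tauto.
Qed.

Lemma CE_cons : consistent tau step CE.
Proof. intros x y H c0 f. apply (proj1 (E_traces x y (CE_E x y H) c0 f)). Qed.

Lemma CE_dp : div_preserving tau step CE.
Proof. intros x y H c0 f. apply (proj2 (E_traces x y (CE_E x y H) c0 f)). Qed.

End Inst.
End Gen.

Theorem theorem5p2 (Act : Type) (tau : Act) (St : Type)
    (step : St -> Act -> St -> Prop) (m : St -> St -> St)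
    (s t u v : St) :
  is_merge step m ->
  bbisim_div tau step s t -> bbisim_div tau step u v ->
  bbisim_div tau step (m s u) (m t v).
Proof.
  intros Hm (K1 & C1 & Hc1 & Hd1 & E1) (K2 & C2 & Hc2 & Hd2 & E2).
  exists (St -> Prop), (CE St m K1 K2 C1 C2). split; [|split].
  - exact (CE_cons Act tau St step m Hm K1 K2 C1 C2 Hc1 Hd1 Hc2 Hd2).
  - exact (CE_dp Act tau St step m Hm K1 K2 C1 C2 Hc1 Hd1 Hc2 Hd2).
  - apply CE_R0. exists s, t, u, v. auto.
Qed.
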